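(* Let $n \ge r \ge 1$, let $\bm U^\star \in \mathbb{R}^{n\times r}$ have rows $\bm u_1^\star,\dots,\bm u_n^\star\in\mathbb{R}^r$, let $\bm M = \bm U^\star\bm U^{\star T}$ (noiseless case), let $\Omega = \{(i,j)\in[n]\times[n]: m_{ij}\ge 0\}$, and let $F(\bm U) = \frac14\|(\bm U\bm U^T - \bm M)_\Omega\|_F^2$ for $\bm U\in\mathbb{R}^{n\times r}$. Let $\mathcal{C}_1,\dots,\mathcal{C}_{2^r}$ be the orthants of $\mathbb{R}^r$, ordered so that consecutive orthants $\mathcal{C}_i,\mathcal{C}_{i+1}$ have sign patterns differing in exactly one coordinate. Suppose $[n]$ is partitioned into $J_1,\dots,J_{2^r}$ with $\bm u_k^\star\in\mathcal{C}_i$ for all $k\in J_i$, let $\bm U_i^\star$ be the submatrix of rows of $\bm U^\star$ indexed by $J_i$, and assume: (1) $\mathrm{rank}(\bm U_i^\star)=r$ for all $i\in[2^r]$; (2) for every $i\in[2^r-1]$, with $\Omega_{i+1,i}=\{(k,l)\in J_{i+1}\times J_i: \bm u_k^{\star T}\bm u_l^\star\ge 0\}$, we have $|\Omega_{i+1,i}|\ge r^2$ and $\mathrm{span}\{\bm u_k^\star\bm u_l^{\star T}:(k,l)\in\Omega_{i+1,i}\} = \mathbb{R}^{r\times r}$. Define $$\gamma := \min\left\{ \|(\bm U^\star\bm D^T + \bm D\bm U^{\star T})_\Omega\|_F^2 \;:\; \bm D\in\mathcal{S}^\perp_{\bm U^\star},\ \|\bm D\|_F = 1\right\}.$$ Then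 $\gamma>0$, and $F$ is geodesically strongly convex on the quotient manifold $\mathcal{M}$ at $[\bm U^\star]$: for every tangent vector $\bm\xi\in \mathrm{T}_{[\bm U^\star]}\mathcal{M}$, $$\mathrm{Hess}\,F([\bm U^\star])[\bm\xi,\bm\xi] \ge \frac{\gamma}{2}\,\|\mathrm{lift}_{\bm U^\star}(\bm\xi)\|_F^2,$$ equivalently $\nabla^2F(\bm U^\star)[\bm D,\bm D]\ge \frac{\gamma}{2}\|\bm D\|_F^2$ for every $\bm D\in\mathcal{S}^\perp_{\bm U^\star}$.
   Context: $(\bm A)_\Omega$ keeps the entries of $\bm A$ in $\Omega$ and zeroes the rest. The quotient manifold is $\mathcal{M}=\mathbb{R}^{n\times r}/\sim$, where $\bm V\sim\bm U$ iff $\bm V=\bm U\bm Q$ for some orthogonal $\bm Q\in\mathbb{R}^{r\times r}$; $[\bm U]$ is the equivalence class. The vertical space at $\bm U$ is $\mathcal{S}_{\bm U}=\{\bm U\bm R: \bm R\in\mathbb{R}^{r\times r},\ \bm R+\bm R^T=\bm 0\}$ and the horizontal space is its orthogonal complement $\mathcal{S}^\perp_{\bm U}=\{\bm D\in\mathbb{R}^{n\times r}: \bm U^T\bm D = \bm D^T\bm U\}$. The map $\mathrm{lift}_{\bm U}:\mathrm{T}_{[\bm U]}\mathcal{M}\to\mathcal{S}^\perp_{\bm U}$ is the standard bijection between tangent vectors of the quotient and horizontal vectors, and the Riemannian Hessian is given by $\mathrm{Hess}\,F([\bm U])[\bm\xi,\bm\xi] = \nabla^2F(\bm U)[\mathrm{lift}_{\bm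 U}(\bm\xi),\mathrm{lift}_{\bm U}(\bm\xi)]$, where $\nabla^2F(\bm U)[\bm D,\bm D]$ is the Euclidean Hessian quadratic form of $F$ at $\bm U$ in direction $\bm D$. *)

(* Defs.v *)
From HB Require Import structures.
From mathcomp Require Import all_boot all_order all_algebra.
From mathcomp Require Import all_classical all_reals all_analysis.
Set Implicit Arguments. Unset Strict Implicit. Unset Printing Implicit Defensive.
Import Order.TTheory GRing.Theory Num.Theory.
Local Open Scope ring_scope.

Section Defs.
Variable R : realType.

Definition frob2 m p (A : 'M[R]_(m, p)) : R := \sum_i \sum_j (A i j) ^+ 2.

Definition maskOmega m (M A : 'M[R]_m) : 'M[R]_m :=
  \matrix_(i, j) (if 0 <= M i j then A i j else 0).

Definition Fobj n r (M : 'M[R]_n) (U : 'M[R]_(n, r)) : R :=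
  4^-1 * frob2 (maskOmega M (U *m U^T - M)).

Definition hessq n r (f : 'M[R]_(n, r) -> R) (U D : 'M[R]_(n, r)) : R :=
  derive1n 2 (fun t : R => f (U + t *: D)) 0.

Definition horizontal n r (U D : 'M[R]_(n, r)) : Prop := U^T *m D = D^T *m U.

Definition in_orthant r (s : {ffun 'I_r -> bool}) (x : 'rV[R]_r) : Prop :=
  forall j, if s j then 0 <= x 0 j else x 0 j <= 0.

Definition rowsub_set n r (J : {set 'I_n}) (U : 'M[R]_(n, r)) : 'M[R]_(#|J|, r) :=
  rowsub (fun k : 'I_#|J| => enum_val k) U.

Definition outer n r (U : 'M[R]_(n, r)) (k l : 'I_n) : 'M[R]_r :=
  (row k U)^T *m row l U.


Definition gamma n r (M : 'M[R]_n) (U : 'M[R]_(n, r)) : R :=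
  inf [set frob2 (maskOmega M (U *m D^T + D *m U^T)) |
       D in [set D : 'M[R]_(n, r) | horizontal U D /\ frob2 D = 1]]%classic.

End Defs.

(* Main.v *)
Require Import Defs.
From HB Require Import structures.
From mathcomp Require Import all_boot all_order all_algebra.
From mathcomp Require Import all_classical all_reals all_analysis.
From mathcomp Require Import ring lra.
Import Order.TTheory GRing.Theory Num.Theory.
Local Open Scope ring_scope.
Set Implicit Arguments. Unset Strict Implicit. Unset Printing Implicit Defensive.

Section Frob.
Variable R : realType.

Lemma frob2E m p (A : 'M[R]_(m, p)) : frob2 A = \tr (A *m A^T).
Proof.
rewrite /frob2 /mxtrace; apply: eq_bigr => i _; rewrite !mxE.
by apply: eq_bigr => j _; rewrite !mxE expr2.
Qed.

Lemma frob2_ge0 m p (A : 'M[R]_(m, p)) : 0 <= frob2 A.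
Proof. by rewrite /frob2; apply: sumr_ge0 => i _; apply: sumr_ge0 => j _; apply: sqr_ge0. Qed.

Lemma frob2_eq0 m p (A : 'M[R]_(m, p)) : frob2 A = 0 -> A = 0.
Proof.
rewrite /frob2 => H; apply/matrixP => i j; rewrite mxE.
have H1 := psumr_eq0P (fun i _ => sumr_ge0 _ (fun j _ => sqr_ge0 (A i j))) H.
have H2 := psumr_eq0P (fun j _ => sqr_ge0 (A i j)) (H1 i isT).
by apply/eqP; rewrite -sqrf_eq0 H2.
Qed.

Lemma frob2Z m p a (A : 'M[R]_(m, p)) : frob2 (a *: A) = a ^+ 2 * frob2 A.
Proof.
rewrite /frob2 mulr_sumr; apply: eq_bigr => i _; rewrite mulr_sumr.
by apply: eq_bigr => j _; rewrite mxE exprMn.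
Qed.

Lemma frob2N m p (A : 'M[R]_(m, p)) : frob2 (- A) = frob2 A.
Proof. by rewrite -scaleN1r frob2Z expr2 mulN1r opprK mul1r. Qed.

Lemma frob2_tr m p (A : 'M[R]_(m, p)) : frob2 A^T = frob2 A.
Proof. by rewrite !frob2E trmxK mxtrace_mulC. Qed.

Lemma frob2_0 m p : frob2 (0 : 'M[R]_(m, p)) = 0.
Proof. by rewrite -(scale0r 0) frob2Z expr2 !mul0r. Qed.

Lemma cauchy_schwarz (I : finType) (a b : I -> R) :
  (\sum_i a i * b i) ^+ 2 <= (\sum_i a i ^+ 2) * (\sum_i b i ^+ 2).
Proof.
have H : 0 <= \sum_i \sum_j (a i * b j - a j * b i) ^+ 2.
  by apply: sumr_ge0 => i _; apply: sumr_ge0 => j _; apply: sqr_ge0.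
have E : \sum_i \sum_j (a i * b j - a j * b i) ^+ 2 =
   2 * ((\sum_i a i ^+ 2) * (\sum_i b i ^+ 2) - (\sum_i a i * b i) ^+ 2).
  have E1 : forall i j, (a i * b j - a j * b i) ^+ 2 =
     a i ^+ 2 * b j ^+ 2 + a j ^+ 2 * b i ^+ 2 - 2 * ((a i * b i) * (a j * b j)).
    by move=> i j; ring.
  under eq_bigr do under eq_bigr do rewrite E1.
  have Ei : forall i, \sum_j (a i ^+ 2 * b j ^+ 2 + a j ^+ 2 * b i ^+ 2 - 2 * (a i * b i * (a j * b j)))
     = a i ^+ 2 * (\sum_j b j ^+ 2) + b i ^+ 2 * (\sum_j a j ^+ 2) - 2 * (a i * b i) * (\sum_j a j * b j).
    move=> i; rewrite sumrB big_split /= !mulr_sumr; congr (_ + _ - _).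
      by apply: eq_bigr => j _; ring.
    by apply: eq_bigr => j _; ring.
  under eq_bigr do rewrite Ei.
  rewrite sumrB big_split /= -!mulr_suml.
  rewrite -mulr_sumr.
  ring.
lra.
Qed.


Lemma frob2_pair m p (A : 'M[R]_(m, p)) :
  frob2 A = \sum_(k : 'I_m * 'I_p) A k.1 k.2 ^+ 2.
Proof. by rewrite /frob2 pair_bigA. Qed.

Lemma lin_bound m1 m2 p q (P : {linear 'M[R]_(p, q) -> 'M[R]_(m1, m2)}) :
  exists C, 0 <= C /\ forall y, frob2 (P y) <= C * frob2 y.
Proof.
exists (\sum_(k : 'I_p * 'I_q) frob2 (P (delta_mx k.1 k.2))); split.
  by apply: sumr_ge0 => k _; apply: frob2_ge0.
move=> y.
have Ey : y = \sum_(k : 'I_p * 'I_q) y k.1 k.2 *: delta_mx k.1 k.2.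
  by rewrite {1}(matrix_sum_delta y) pair_bigA.
have -> : P y = \sum_(k : 'I_p * 'I_q) y k.1 k.2 *: P (delta_mx k.1 k.2).
  by rewrite {1}Ey linear_sum; apply: eq_bigr => k _; rewrite linearZ.
set Y := frob2 y.
have -> : (\sum_(k : 'I_p * 'I_q) frob2 (P (delta_mx k.1 k.2))) * Y =
   \sum_i \sum_j Y * \sum_(k : 'I_p * 'I_q) (P (delta_mx k.1 k.2)) i j ^+ 2.
  rewrite mulrC mulr_sumr /frob2.
  under eq_bigr do rewrite mulr_sumr.
  rewrite [LHS]exchange_big /=; apply: eq_bigr => i _.
  under eq_bigr do rewrite mulr_sumr.
  rewrite [LHS]exchange_big /=; apply: eq_bigr => j _.
  by rewrite mulr_sumr.
rewrite /frob2; apply: ler_sum => i _; apply: ler_sum => j _.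
rewrite summxE.
under eq_bigr do rewrite mxE.
rewrite mulrC /Y.
apply: (le_trans (cauchy_schwarz _ _)).
by rewrite mulrC frob2_pair.
Qed.

Lemma inj_bound m1 m2 p q (h : {linear 'M[R]_(m1, m2) -> 'M[R]_(p, q)}) :
  injective h -> exists c, 0 < c /\ forall x, c * frob2 x <= frob2 (h x).
Proof.
move=> hinj.
have ker0 : lker (linfun h) == 0%VS.
  by apply/lker0P => x y; rewrite !lfunE; apply: hinj.
have [C [C0 HC]] := lin_bound ((linfun h)^-1)%VF.
exists (C + 1)^-1; split; first by rewrite invr_gt0; lra.
move=> x; rewrite ler_pdivrMl; last by lra.
have E := lker0_lfunK ker0 x; rewrite lfunE /= in E.
have H : frob2 x <= C * frob2 (h x) by rewrite -{1}E; exact: HC.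
apply: (le_trans H); apply: ler_wpM2r; [exact: frob2_ge0| lra].
Qed.

End Frob.

Section Hess.
Variable R : realType.

Lemma expand_sq n r (U D : 'M[R]_(n, r)) t :
  (U + t *: D) *m (U + t *: D)^T - U *m U^T =
  t *: (U *m D^T + D *m U^T) + t ^+ 2 *: (D *m D^T).
Proof.
apply/matrixP => i j; rewrite !mxE.
rewrite mulrDr !mulr_sumr -!big_split -sumrB /=.
by apply: eq_bigr => k _; rewrite !mxE; ring.
Qed.

Lemma deriv2_X2 (Q : {poly R}) : (('X^2 * Q)^`())^`().[0] = 2 * Q.[0].
Proof.
rewrite expr2 !derivM derivX !mul1r !mulr1 !derivD !derivM derivX !mul1r !mulr1.
rewrite derivD derivX !(hornerD, hornerM, hornerX, hornerC).
by rewrite !addr0 !mul0r !addr0.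
Qed.

Lemma hess_eq n r (U D : 'M[R]_(n, r)) :
  hessq (Fobj (U *m U^T)) U D =
  2^-1 * frob2 (maskOmega (U *m U^T) (U *m D^T + D *m U^T)).
Proof.
set M := U *m U^T; set B := U *m D^T + D *m U^T; set C := D *m D^T.
pose Q : {poly R} := (4^-1)%:P * \sum_i \sum_j
   (if 0 <= M i j then ((B i j)%:P + 'X * (C i j)%:P) ^+ 2 else 0).
have Ef : (fun t => Fobj M (U + t *: D)) = horner ('X ^+ 2 * Q).
  apply/funext => t; rewrite /Fobj /frob2 expand_sq /= hornerM hornerXn hornerCM.
  rewrite mulrA [t ^+ 2 * _]mulrC -mulrA; congr (_ * _); rewrite horner_sum.
  rewrite mulr_sumr; apply: eq_bigr => i _.
  rewrite horner_sum mulr_sumr; apply: eq_bigr => j _.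
  rewrite !mxE; case: ifP => _.
    by rewrite horner_exp hornerD hornerC hornerM hornerX hornerC; ring.
  by rewrite horner0 expr2 !mulr0.
rewrite /hessq Ef /derive1n /= -!derivE.
rewrite deriv2_X2 /Q hornerCM horner_sum /frob2 mulrA.
have -> : 2 * 4^-1 = 2^-1 :> R by field.
congr (_ * _); apply: eq_bigr => i _; rewrite horner_sum; apply: eq_bigr => j _.
rewrite !mxE; case: ifP => _.
  by rewrite horner_exp hornerD hornerC hornerM hornerX hornerC mul0r addr0.
by rewrite horner0 expr2 !mulr0.
Qed.
End Hess.

Section Key.
Variables (R : realType) (n r N : nat) (U : 'M[R]_(n, r)).
Variables (part : 'I_n -> 'I_N) (sigma : 'I_N -> {ffun 'I_r -> bool}).
Hypothesis orth : forall k, in_orthant (sigma (part k)) (row k U).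
Hypothesis rk : forall i, \rank (rowsub_set [set k | part k == i] U) = r.

Lemma same_orthant_ge0 k l : part k = part l -> 0 <= (U *m U^T) k l.
Proof.
move=> e; rewrite !mxE; apply: sumr_ge0 => j _; rewrite !mxE.
have := orth k j; have := orth l j; rewrite !mxE e.
by case: (sigma (part l) j) => h1 h2; [apply: mulr_ge0 | apply: mulr_le0].
Qed.

Lemma block_skew i (D : 'M[R]_(n, r)) :
  (forall k l, 0 <= (U *m U^T) k l -> (U *m D^T + D *m U^T) k l = 0) ->
  exists S : 'M[R]_r, S^T = - S /\ forall k, part k = i -> row k D = row k U *m S.
Proof.
move=> HD.
set J := [set k | part k == i].
pose f := fun k : 'I_#|J| => enum_val k.
pose Ui := rowsub f U; pose Di := rowsub f D.
have full : row_full Ui by rewrite /row_full; apply/eqP; exact: (rk i).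
case/row_fullP: full => A HA.
have fJ : forall a, part (f a) = i.
  by move=> a; have := enum_valP a; rewrite inE => /eqP.
have Z : Ui *m Di^T + Di *m Ui^T = 0.
  apply/matrixP => a b.
  have -> : (Ui *m Di^T + Di *m Ui^T) a b = (U *m D^T + D *m U^T) (f a) (f b).
    by rewrite !mxE; congr (_ + _); apply: eq_bigr => c _; rewrite !mxE.
  rewrite HD; first by rewrite mxE.
  by apply: same_orthant_ge0; rewrite !fJ.
have Sskew : (A *m Di)^T = - (A *m Di).
  have := congr1 (fun X => A *m X *m A^T) Z.
  rewrite mulmxDr mulmxDl !mulmxA HA mul1mx -[X in _ + X = _]mulmxA -[Ui^T *m A^T]trmx_mul HA.
  rewrite trmx1 mulmx1 mulmx0 mul0mx -trmx_mul => /eqP; rewrite addr_eq0 => /eqP //.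
have EDi : Di = Ui *m (A *m Di).
  have := congr1 (fun X => X *m A^T) Z.
  rewrite mulmxDl mul0mx -!mulmxA -[Ui^T *m A^T]trmx_mul HA trmx1 mulmx1 -trmx_mul.
  move=> /eqP; rewrite addrC addr_eq0 => /eqP E.
  by rewrite {1}E Sskew mulmxN opprK.
exists (A *m Di); split => //.
move=> k Hk.
have kJ : k \in J by rewrite inE Hk.
set a := enum_rank_in kJ k.
have fa : f a = k by rewrite /f /a enum_rankK_in.
have -> : row k D = row a Di by rewrite row_rowsub fa.
have -> : row k U = row a Ui by rewrite row_rowsub fa.
by rewrite {1}EDi row_mul.
Qed.

Lemma prod_row m p q (A : 'M[R]_(m, p)) (B : 'M[R]_(q, p)) k l :
  (A *m B^T) k l = (row k A *m (row l B)^T) 0 0.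
Proof. by rewrite !mxE; apply: eq_bigr => c _; rewrite !mxE. Qed.

Lemma mxeD m p (A B : 'M[R]_(m, p)) i j : (A + B) i j = A i j + B i j.
Proof. by rewrite !mxE. Qed.
Lemma mxeN m p (A : 'M[R]_(m, p)) i j : (- A) i j = - A i j.
Proof. by rewrite !mxE. Qed.

Lemma mxeT m p (A : 'M[R]_(m, p)) i j : A^T i j = A j i.
Proof. by rewrite !mxE. Qed.

Lemma link i i' (D : 'M[R]_(n, r)) (S1 S2 : 'M[R]_r) (Om : {set 'I_n * 'I_n}) :
  Om = [set p : 'I_n * 'I_n | [&& part p.1 == i', part p.2 == i &
                   0 <= (row p.1 U *m (row p.2 U)^T) 0 0]] ->
  (forall k l, 0 <= (U *m U^T) k l -> (U *m D^T + D *m U^T) k l = 0) ->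
  S1^T = - S1 ->
  (forall k, part k = i -> row k D = row k U *m S1) ->
  (forall k, part k = i' -> row k D = row k U *m S2) ->
  (<< [seq outer U p.1 p.2 | p <- enum Om] >>)%VS = fullv ->
  S2 = S1.
Proof.
move=> EOm HD Sk1 H1 H2 Hspan.
set T := S2 - S1.
have HT : forall p, p \in Om -> (row p.1 U *m T *m (row p.2 U)^T) 0 0 = 0.
  move=> [k l]; rewrite EOm inE /= => /and3P [/eqP hk /eqP hl hM].
  have := HD k l; rewrite prod_row => /(_ hM).
  rewrite mxE (prod_row U D) (prod_row D U) (H1 l hl) (H2 k hk).
  rewrite trmx_mul Sk1 mulNmx mulmxN mxeN mulmxA => E.
  by rewrite /T mulmxBr mulmxBl mxeD mxeN -E addrC.
set s := [seq outer U p.1 p.2 | p <- enum Om].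
pose phi (X : 'M[R]_r) := \tr (X *m T^T).
have phiT : phi T = frob2 T by rewrite /phi frob2E.
have phis : forall X, X \in s -> phi X = 0.
  move=> X /mapP [[k l] kl ->]; rewrite mem_enum in kl.
  rewrite /phi /outer -mulmxA mxtrace_mulC /mxtrace big_ord1 -(HT _ kl) /=.
  have -> : row l U *m T^T *m (row k U)^T = (row k U *m T *m (row l U)^T)^T.
    by rewrite !trmx_mul trmxK mulmxA.
  by rewrite mxeT.
have Tspan : T \in span (in_tuple s) by rewrite Hspan memvf.
have := coord_span Tspan.
set c := coord _.
move=> ET.
have : phi T = 0.
  rewrite [in LHS]ET /phi mulmx_suml linear_sum big1 // => j _.
  rewrite -scalemxAl linearZ /=.
  have -> : \tr ((in_tuple s)`_j *m T^T) = 0.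
    by apply: phis; apply: mem_nth; exact: ltn_ord.
  by rewrite mulr0.
rewrite phiT => /frob2_eq0 /eqP; rewrite subr_eq0 => /eqP //.
Qed.

Lemma horiz_skew_zero (S : 'M[R]_r) :
  S^T = - S -> horizontal U (U *m S) -> U *m S = 0.
Proof.
move=> Sk; rewrite /horizontal => H.
set D := U *m S.
have E1 : frob2 D = \tr (S^T *m ((U^T *m U) *m S)).
  by rewrite -frob2_tr frob2E trmxK /D trmx_mul !mulmxA.
have E2 : (U^T *m U) *m S = - (S *m (U^T *m U)).
  by rewrite -mulmxA H /D trmx_mul -mulmxA Sk mulNmx.
have E3 : \tr (S^T *m (S *m (U^T *m U))) = frob2 D.
  have -> : frob2 D = frob2 (U *m S^T) by rewrite Sk mulmxN frob2N.
  by rewrite frob2E trmx_mul trmxK !mulmxA mxtrace_mulC !mulmxA.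
have : frob2 D = - frob2 D by rewrite {1}E1 E2 mulmxN linearN /= E3.
move=> e; apply: frob2_eq0; lra.
Qed.


Lemma mask_entry (M A : 'M[R]_n) i j :
  maskOmega M A i j = if 0 <= M i j then A i j else 0.
Proof. by rewrite mxE. Qed.

Hypothesis span : forall i i' : 'I_N, nat_of_ord i' = i.+1 ->
     let Om := [set p : 'I_n * 'I_n | [&& part p.1 == i', part p.2 == i &
                   0 <= (row p.1 U *m (row p.2 U)^T) 0 0]] in
     (r ^ 2 <= #|Om|)%N /\
     (<< [seq outer U p.1 p.2 | p <- enum Om] >>)%VS = fullv.

Lemma key_zero (N0 : (0 < N)%N) (D : 'M[R]_(n, r)) :
  horizontal U D -> maskOmega (U *m U^T) (U *m D^T + D *m U^T) = 0 -> D = 0.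
Proof.
move=> hD hL.
have HD : forall k l, 0 <= (U *m U^T) k l -> (U *m D^T + D *m U^T) k l = 0.
  move=> k l hkl; move: hL => /matrixP /(_ k l).
  by rewrite /= mask_entry hkl => ->; rewrite mxE.
have : forall i, exists S : 'M[R]_r,
    S^T = - S /\ forall k, part k = i -> row k D = row k U *m S.
  by move=> i; apply: block_skew HD.
case/fin_all_exists => Sf HSf.
pose i0 : 'I_N := Ordinal N0.
have claim : forall m (Hm : (m < N)%N), Sf (Ordinal Hm) = Sf i0.
  elim=> [|m IH] Hm; first by congr Sf; apply: val_inj.
  have Hm' : (m < N)%N by apply: ltnW.
  rewrite -(IH Hm').
  have [_ Hs] := span (i := Ordinal Hm') (i' := Ordinal Hm) erefl.
  exact: (link erefl HD (HSf (Ordinal Hm')).1 (HSf (Ordinal Hm')).2 (HSf (Ordinal Hm)).2 Hs).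
have allS : forall i, Sf i = Sf i0.
  move=> i; rewrite -(claim i (ltn_ord i)); congr Sf; exact: val_inj.
have ED : D = U *m Sf i0.
  apply/row_matrixP => k; rewrite row_mul -(allS (part k)).
  exact: (HSf (part k)).2.
rewrite ED; apply: horiz_skew_zero; first exact: (HSf i0).1.
by rewrite -ED.
Qed.

End Key.

Section Main.
Variable R : realType.

Lemma frob2_block m1 m2 p1 p2 (A : 'M[R]_(m1, p1)) :
  frob2 (block_mx A 0 0 (0 : 'M[R]_(m2, p2))) = frob2 A.
Proof.
rewrite /frob2 big_split_ord /= [X in _ + X]big1 ?addr0.
  apply: eq_bigr => i _; rewrite big_split_ord /= [X in _ + X]big1 ?addr0.
    by apply: eq_bigr => j _; rewrite block_mxEul.
  by move=> j _; rewrite block_mxEur mxE expr2 mulr0.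
move=> i _; rewrite big_split_ord /= !big1 ?addr0 // => j _.
  by rewrite block_mxEdr mxE expr2 mulr0.
by rewrite block_mxEdl mxE expr2 mulr0.
Qed.

Lemma mask_lin n (M X Y : 'M[R]_n) a :
  maskOmega M (a *: X + Y) = a *: maskOmega M X + maskOmega M Y.
Proof. by apply/matrixP => i j; rewrite !mxE; case: ifP => _ //; rewrite mulr0 addr0. Qed.

Definition Lmap n r (U D : 'M[R]_(n, r)) : 'M[R]_n :=
  maskOmega (U *m U^T) (U *m D^T + D *m U^T).

Definition hmap n r (U D : 'M[R]_(n, r)) : 'M[R]_(n + r) :=
  block_mx (Lmap U D) 0 0 (U^T *m D - D^T *m U).

Lemma Lmap_lin n r (U : 'M[R]_(n, r)) a D1 D2 :
  Lmap U (a *: D1 + D2) = a *: Lmap U D1 + Lmap U D2.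
Proof.
rewrite /Lmap -mask_lin; congr maskOmega.
rewrite linearD linearZ /= mulmxDr mulmxDl -scalemxAr -scalemxAl.
by rewrite scalerDr addrACA.
Qed.

Lemma trZ m p a (A : 'M[R]_(m, p)) : (a *: A)^T = a *: A^T.
Proof. by apply/matrixP => i j; rewrite !mxE. Qed.

Lemma hmap_lin n r (U : 'M[R]_(n, r)) : linear (hmap U).
Proof.
move=> a D1 D2; rewrite /hmap scale_block_mx add_block_mx !scaler0 !addr0 Lmap_lin.
congr block_mx.
rewrite linearD linearZ /= [(_ + _)^T]linearD /= trZ mulmxDl -scalemxAl.
by rewrite scalerBr opprD addrACA.
Qed.

HB.instance Definition _ n r (U : 'M[R]_(n, r)) :=
  GRing.isLinear.Build R 'M[R]_(n, r) 'M[R]_(n + r) *:%R (hmap U) (hmap_lin U).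


Lemma LmapZ n r (U : 'M[R]_(n, r)) a D : Lmap U (a *: D) = a *: Lmap U D.
Proof.
have := Lmap_lin U a D 0; rewrite addr0 => ->.
have -> : Lmap U 0 = 0.
  by apply/matrixP => i j; rewrite !mxE; case: ifP => _ //; rewrite !big1 ?addr0 // => k _; rewrite !mxE ?mulr0 ?mul0r.
by rewrite addr0.
Qed.

Lemma normalize m p (A : 'M[R]_(m, p)) :
  frob2 A != 0 -> frob2 ((Num.sqrt (frob2 A))^-1 *: A) = 1.
Proof.
move=> nz; rewrite frob2Z exprVn sqr_sqrtr ?frob2_ge0 // mulVf //.
Qed.

Lemma horizZ n r (U D : 'M[R]_(n, r)) a : horizontal U D -> horizontal U (a *: D).
Proof. by rewrite /horizontal => h; rewrite -scalemxAr trZ -scalemxAl h. Qed.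

End Main.

Unset Implicit Arguments.
Set Strict Implicit.

Theorem theorem3p5 (R : realType) (n r : nat) (Ustar : 'M[R]_(n, r))
  (sigma : 'I_(2 ^ r) -> {ffun 'I_r -> bool})
  (part : 'I_n -> 'I_(2 ^ r)) :
  (1 <= r <= n)%N ->
  injective sigma ->
  (forall i i' : 'I_(2 ^ r), nat_of_ord i' = i.+1 ->
     #|[set j | sigma i j != sigma i' j]| = 1%N) ->
  (forall k : 'I_n, in_orthant (sigma (part k)) (row k Ustar)) ->
  (forall i : 'I_(2 ^ r),
     \rank (rowsub_set [set k | part k == i] Ustar) = r) ->
  (forall i i' : 'I_(2 ^ r), nat_of_ord i' = i.+1 ->
     let Om := [set p : 'I_n * 'I_n | [&& part p.1 == i', part p.2 == i &
                   0 <= (row p.1 Ustar *m (row p.2 Ustar)^T) 0 0]] in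
     (r ^ 2 <= #|Om|)%N /\
     (<< [seq outer Ustar p.1 p.2 | p <- enum Om] >>)%VS = fullv) ->
  let M := Ustar *m Ustar^T in
  0 < gamma M Ustar /\
  (forall D : 'M[R]_(n, r), horizontal Ustar D ->
     hessq (Fobj M) Ustar D >= gamma M Ustar / 2 * frob2 D).
Proof.
move=> /andP [r1 rn] sinj sdiff orth rk span M.
have N0 : (0 < 2 ^ r)%N by rewrite expn_gt0.
have key : forall D, horizontal Ustar D -> Lmap Ustar D = 0 -> D = 0.
  by move=> D hD hL; apply: (key_zero orth rk span N0 hD hL).
have hinj : injective (hmap Ustar).
  apply: raddf_inj => D.
  rewrite /hmap -(@block_mx0 _ n r n r) => /eq_block_mx [hL _ _ hH].
  apply: key => //; rewrite /horizontal; apply/eqP; rewrite -subr_eq0; exact/eqP.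
have [c [c0 Hc]] := inj_bound hinj.
have bound : forall D, horizontal Ustar D -> c * frob2 D <= frob2 (Lmap Ustar D).
  move=> D hD; have H : c * frob2 D <= frob2 (hmap Ustar D) := Hc D.
  move: H; rewrite /hmap.
  rewrite (_ : Ustar^T *m D - D^T *m Ustar = 0); last by rewrite hD subrr.
  by rewrite frob2_block.
have fU : frob2 Ustar != 0.
  apply/eqP => /frob2_eq0 U0.
  have := rk (Ordinal N0); rewrite /rowsub_set U0.
  have -> : rowsub (fun k : 'I_#|[set k | part k == Ordinal N0]| => enum_val k) (0 : 'M[R]_(n, r)) = 0.
    by apply/matrixP => i j; rewrite !mxE.
  rewrite mxrank0 => r0; move: r1; rewrite -r0.
  by [].
set E := [set frob2 (maskOmega M (Ustar *m D^T + D *m Ustar^T)) |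
       D in [set D : 'M[R]_(n, r) | horizontal Ustar D /\ frob2 D = 1]]%classic.
have hlb : lbound E c.
  move=> y [D [hD fD] <-]; have := bound D hD; rewrite fD mulr1 => //.
have hlb' : has_lbound E by exists c.
have gc : c <= gamma M Ustar.
  apply: lb_le_inf => //.
  exists (frob2 (Lmap Ustar ((Num.sqrt (frob2 Ustar))^-1 *: Ustar))).
  exists ((Num.sqrt (frob2 Ustar))^-1 *: Ustar) => //; split; last exact: normalize.
  by apply: horizZ.
split; first exact: (lt_le_trans c0 gc).
move=> D hD; rewrite /M hess_eq -/M.
have Lge : 0 <= frob2 (Lmap Ustar D) by exact: frob2_ge0.
case: (frob2 D =P 0) => [->|nz].
  by rewrite mulr0; apply: mulr_ge0 => //; rewrite invr_ge0.
set s := (Num.sqrt (frob2 D))^-1.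
have hD' : E (frob2 (Lmap Ustar (s *: D))).
  exists (s *: D) => //; split; first exact: horizZ.
  by apply: normalize; apply/eqP.
have g1 := ge_inf hlb' hD'.
rewrite LmapZ frob2Z /s exprVn sqr_sqrtr ?frob2_ge0 // in g1.
set g := gamma M Ustar in g1 *.
set fD := frob2 D in g1 nz *.
set LD := frob2 (Lmap Ustar D) in g1 Lge *.
have fD0 : 0 < fD by rewrite lt_neqAle eq_sym; apply/andP; split; [apply/eqP|exact: frob2_ge0].
have h2 : g * fD <= LD.
  have := ler_wpM2r (ltW fD0) g1; rewrite mulrAC mulVf ?mul1r //; apply/eqP; exact: nz.
have -> : g / 2 * fD = 2^-1 * (g * fD) by rewrite mulrAC mulrC.
by apply: ler_wpM2l => //; rewrite invr_ge0.
Qed.
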